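(* Let $\kappa$ be an infinite cardinal. There is a $\kappa^+$-system of width $\kappa$ with no cofinal branch.
   Context: Let $\lambda$ be an infinite regular cardinal. A binary relation $R$ is tree-like if whenever $a<_Rc$ and $b<_Rc$, then $a,b$ are $R$-comparable ($a=b$, $a<_Rb$ or $b<_Ra$). A $\lambda$-system is $S=\langle\bigcup_{\alpha\in I}\{\alpha\}\times\kappa_\alpha,\mathcal{R}\rangle$ where: $I\subseteq\lambda$ is unbounded, each $\kappa_\alpha$ is a cardinal with $0<\kappa_\alpha<\lambda$ (level $S_\alpha=\{\alpha\}\times\kappa_\alpha$); $\mathcal{R}$ is a set of binary, transitive, tree-like relations on the underlying set with $0<|\mathcal{R}|<\lambda$; if $(\alpha_0,\beta_0)<_R(\alpha_1,\beta_1)$ for $R\in\mathcal{R}$ then $\alpha_0<\alpha_1$; and for all $\alpha_0<\alpha_1$ in $I$ there are $\beta_0<\kappa_{\alpha_0},\beta_1<\kappa_{\alpha_1}$, $R\in\mathcal{R}$ with $(\alpha_0,\beta_0)<_R(\alpha_1,\beta_1)$. $\mathrm{width}(S)=\max(\sup_\alpha\kappa_\alpha,|\mathcal{R}|)$. A branch through $R\in\mathcal{R}$ is a set of pairwise $R$-comparable elements; it is cofinal if it meets $S_\alpha$ for unboundedly many $\alpha\in I$; $S$ has a cofinal branch if some $R\in\mathcal{R}$ has a cofinal branch. *)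

(* Defs.v *)
From Stdlib Require Import Relations Wellfounded.

Definition card_le (A B : Type) : Prop :=
  exists f : A -> B, forall x y, f x = f y -> x = y.
Definition card_lt (A B : Type) : Prop := card_le A B /\ ~ card_le B A.

Definition infinite_type (K : Type) : Prop :=
  ~ (exists n : nat, card_le K {m : nat | m < n}).

Definition well_order {L : Type} (lt : L -> L -> Prop) : Prop :=
  well_founded lt /\ (forall x y z, lt x y -> lt y z -> lt x z) /\
  (forall x y, lt x y \/ x = y \/ lt y x).

(* (L, lt) is (order-isomorphic to) the successor cardinal kappa^+ of |K|:
   a well-order not injectable into K all of whose proper initial
   segments inject into K. *)
Definition is_succ_cardinal_of (K L : Type) (lt : L -> L -> Prop) : Prop :=
  well_order lt /\ (forall x : L, card_le {y : L | lt y x} K) /\ ~ card_le L K.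

(* Underlying set of a lambda-system: the disjoint union of levels
   S_alpha = {alpha} x Lev alpha over alpha in I. *)
Definition node {L : Type} (I : L -> Prop) (Lev : {a : L | I a} -> Type) : Type :=
  { a : {a : L | I a} & Lev a }.

Definition lvl {L : Type} {I : L -> Prop} {Lev : {a : L | I a} -> Type}
  (u : node I Lev) : L := proj1_sig (projT1 u).

Definition tree_like {T : Type} (R : T -> T -> Prop) : Prop :=
  forall a b c, R a c -> R b c -> a = b \/ R a b \/ R b a.

Definition is_lambda_system (L : Type) (lt : L -> L -> Prop) (I : L -> Prop)
  (Lev : {a : L | I a} -> Type) (Rs : (node I Lev -> node I Lev -> Prop) -> Prop)
  : Prop :=
  (forall x : L, exists y : L, I y /\ ~ lt y x) /\
  (forall a, inhabited (Lev a) /\ card_lt (Lev a) L) /\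
  (forall R, Rs R -> transitive _ R /\ tree_like R) /\
  (exists R, Rs R) /\ card_lt {R | Rs R} L /\
  (forall R, Rs R -> forall u v : node I Lev, R u v -> lt (lvl u) (lvl v)) /\
  (forall a0 a1 : {a : L | I a}, lt (proj1_sig a0) (proj1_sig a1) ->
     exists (b0 : Lev a0) (b1 : Lev a1) (R : node I Lev -> node I Lev -> Prop),
       Rs R /\ R (existT _ a0 b0) (existT _ a1 b1)).

(* width(S) = max(sup_alpha kappa_alpha, |R|) = |K|, i.e. |K| is the least
   upper bound of the cardinals kappa_alpha (alpha in I) and |R|. *)
Definition width_is {L : Type} {I : L -> Prop} (Lev : {a : L | I a} -> Type)
  (Rs : (node I Lev -> node I Lev -> Prop) -> Prop) (K : Type) : Prop :=
  (forall a, card_le (Lev a) K) /\ card_le {R | Rs R} K /\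
  (forall M : Type, (forall a, card_le (Lev a) M) -> card_le {R | Rs R} M ->
     card_le K M).

Definition is_branch {T : Type} (R : T -> T -> Prop) (B : T -> Prop) : Prop :=
  forall u v, B u -> B v -> u = v \/ R u v \/ R v u.

Definition is_cofinal {L : Type} (lt : L -> L -> Prop) {I : L -> Prop}
  {Lev : {a : L | I a} -> Type} (B : node I Lev -> Prop) : Prop :=
  forall x : L, exists u, B u /\ ~ lt (lvl u) x.

Definition has_cofinal_branch {L : Type} (lt : L -> L -> Prop) {I : L -> Prop}
  {Lev : {a : L | I a} -> Type} (Rs : (node I Lev -> node I Lev -> Prop) -> Prop)
  : Prop :=
  exists R, Rs R /\ exists B : node I Lev -> Prop, is_branch R B /\ is_cofinal lt B.

(* Main.v *)
Require Import Defs.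
From Stdlib Require Import Arith PeanoNat Relations Wellfounded List Classical ClassicalEpsilon FunctionalExtensionality ProofIrrelevance Lia.

Lemma cle_trans (A B C : Type) : card_le A B -> card_le B C -> card_le A C.
Proof.
  intros [f Hf] [g Hg]. exists (fun x => g (f x)). intros x y E. auto.
Qed.

Lemma wf_irrefl (L : Type) (lt : L -> L -> Prop) : well_founded lt -> forall x, ~ lt x x.
Proof.
  intros W x. induction (W x) as [x _ IH]. intro H. exact (IH x H H).
Qed.

Lemma no_list_cover (K : Type) : infinite_type K -> forall l : list K, exists x, ~ In x l.
Proof.
  intros Hinf l. apply NNPP. intro Hn.
  assert (Hall : forall x, In x l).
  { intro x. apply NNPP. intro Hx. apply Hn. exists x. exact Hx. }
  assert (Hix : forall x, exists i, i < length l /\ nth_error l i = Some x).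
  { intro x. destruct (In_nth_error _ _ (Hall x)) as [i Hi]. exists i. split; auto.
    apply nth_error_Some. rewrite Hi. discriminate. }
  apply Hinf. exists (length l).
  exists (fun x => exist (fun m => m < length l) (proj1_sig (constructive_indefinite_description _ (Hix x)))
                     (proj1 (proj2_sig (constructive_indefinite_description _ (Hix x))))).
  intros x y E. apply (f_equal (@proj1_sig _ _)) in E. simpl in E.
  destruct (constructive_indefinite_description _ (Hix x)) as [i [? Hi]].
  destruct (constructive_indefinite_description _ (Hix y)) as [j [? Hj]].
  simpl in E. subst. rewrite Hi in Hj. injection Hj. auto.
Qed.

Fixpoint lst (K : Type) (nx : list K -> K) (n : nat) : list K :=
  match n with 0 => nil | S n => nx (lst K nx n) :: lst K nx n end.

Lemma dedekind (K : Type) : infinite_type K -> exists s : nat -> K, forall n m, s n = s m -> n = m.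
Proof.
  intro Hinf.
  set (nx := fun l => proj1_sig (constructive_indefinite_description _ (no_list_cover K Hinf l))).
  assert (Hnx : forall l, ~ In (nx l) l).
  { intro l. unfold nx. destruct (constructive_indefinite_description _ _). auto. }
  exists (fun n => nx (lst K nx n)).
  assert (Hin : forall n m, n < m -> In (nx (lst K nx n)) (lst K nx m)).
  { intros n m. induction m; intro H. lia. simpl.
    destruct (Nat.eq_dec n m). subst. left; auto. right. apply IHm. lia. }
  intros n m E. destruct (Nat.lt_total n m) as [h|[h|h]]; auto.
  - exfalso. apply (Hnx (lst K nx m)). rewrite <- E. auto.
  - exfalso. apply (Hnx (lst K nx n)). rewrite E. auto.
Qed.

Lemma opt_le (K X : Type) : infinite_type K -> card_le X K -> card_le (option X) K.
Proof.
  intros Hinf HX. apply cle_trans with (option K).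
  { destruct HX as [f Hf]. exists (fun o => match o with None => None | Some x => Some (f x) end).
    intros [x|] [y|] E; try discriminate; auto. injection E; intro; f_equal; auto. }
  destruct (dedekind K Hinf) as [s Hs].
  exists (fun o => match o with None => s 0 | Some k =>
     match excluded_middle_informative (exists n, s n = k) with
     | left H => s (S (proj1_sig (constructive_indefinite_description _ H)))
     | right _ => k end end).
  intros [x|] [y|] E; auto.
  - destruct (excluded_middle_informative (exists n, s n = x)) as [H1|H1];
    destruct (excluded_middle_informative (exists n, s n = y)) as [H2|H2].
    + destruct (constructive_indefinite_description _ H1) as [n Hn].
      destruct (constructive_indefinite_description _ H2) as [m Hm]. simpl in E.
      apply Hs in E. injection E; intro; subst. reflexivity.
    + destruct (constructive_indefinite_description _ H1) as [n Hn]. simpl in E.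
      exfalso; apply H2; eauto.
    + destruct (constructive_indefinite_description _ H2) as [n Hn]. simpl in E.
      exfalso; apply H1; eauto.
    + subst; auto.
  - destruct (excluded_middle_informative (exists n, s n = x)) as [H1|H1].
    + destruct (constructive_indefinite_description _ H1) as [n Hn]. simpl in E.
      apply Hs in E. discriminate.
    + exfalso; apply H1; eauto.
  - destruct (excluded_middle_informative (exists n, s n = y)) as [H1|H1].
    + destruct (constructive_indefinite_description _ H1) as [n Hn]. simpl in E.
      apply Hs in E. discriminate.
    + exfalso; apply H1; eauto.
Qed.

Lemma no_max (K L : Type) (lt : L -> L -> Prop) : infinite_type K -> is_succ_cardinal_of K L lt ->
  forall x, exists y, lt x y.
Proof.
  intros Hinf [[W [Tr Tri]] [Hseg HL]] x. apply NNPP. intro Hn.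
  assert (Hm : forall y, ~ lt x y) by (intros y Hy; apply Hn; eauto).
  apply HL. apply cle_trans with (option {y | lt y x}); [| apply opt_le; auto].
  exists (fun y => match excluded_middle_informative (lt y x) with
                   | left H => Some (exist _ y H) | right _ => None end).
  intros y z. destruct (excluded_middle_informative (lt y x)) as [H1|H1];
    destruct (excluded_middle_informative (lt z x)) as [H2|H2]; intro E; try discriminate.
  - injection E; auto.
  - destruct (Tri y x) as [?|[?|?]]; try contradiction; [|exfalso; eapply Hm; eauto].
    destruct (Tri z x) as [?|[?|?]]; try contradiction; [|exfalso; eapply Hm; eauto]. congruence.
Qed.

Definition choose_opt (K : Type) (P : K -> Prop) : option K :=
  match excluded_middle_informative (exists k, P k) with
  | left H => Some (proj1_sig (constructive_indefinite_description _ H))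
  | right _ => None end.

Lemma choose_opt_spec (K : Type) (P : K -> Prop) : (exists k, P k) -> exists k, choose_opt K P = Some k /\ P k.
Proof.
  intro H. unfold choose_opt. destruct (excluded_middle_informative _) as [H1|H1]; [|contradiction].
  destruct (constructive_indefinite_description _ H1) as [k Hk]. simpl. eauto.
Qed.

Lemma hartogs (K L : Type) (lt : L -> L -> Prop) (k0 : K) : is_succ_cardinal_of K L lt -> card_le K L.
Proof.
  intros [[W [Tr Tri]] [Hseg HL]].
  set (F := fun (a : L) (rec : forall b, lt b a -> option K) =>
              choose_opt K (fun k => forall b (H : lt b a), rec b H <> Some k)).
  set (f := Fix W (fun _ => option K) F).
  assert (Hf : forall a, f a = choose_opt K (fun k => forall b, lt b a -> f b <> Some k)).
  { intro a. unfold f. rewrite Fix_eq. reflexivity.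
    intros x g h Hgh. unfold F. f_equal.
    assert (g = h) as ->; auto.
    apply functional_extensionality_dep; intro y. apply functional_extensionality_dep; intro p. auto. }
  assert (Hex : exists a, forall k, exists b, lt b a /\ f b = Some k).
  { apply NNPP. intro Hn. exfalso. apply HL.
    assert (Ha : forall a, exists k, f a = Some k /\ forall b, lt b a -> f b <> Some k).
    { intro a. rewrite Hf. apply choose_opt_spec.
      apply NNPP. intro H2. apply Hn. exists a. intro k. apply NNPP. intro H3.
      apply H2. exists k. intros b Hb E. apply H3. eauto. }
    exists (fun a => match f a with Some k => k | None => k0 end).
    intros a b E. destruct (Ha a) as [ka [Ea Pa]]. destruct (Ha b) as [kb [Eb Pb]].
    rewrite Ea, Eb in E. subst.
    destruct (Tri a b) as [h|[h|h]]; auto.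
    - exfalso. apply (Pb a h). congruence.
    - exfalso. apply (Pa b h). congruence. }
  destruct Hex as [a Ha].
  exists (fun k => proj1_sig (constructive_indefinite_description _ (Ha k))).
  intros x y E.
  destruct (constructive_indefinite_description _ (Ha x)) as [bx [? Ex]].
  destruct (constructive_indefinite_description _ (Ha y)) as [y' [? Ey]]. simpl in E. subst.
  congruence.
Qed.

Theorem mainTheorem11 :
  forall (K : Type), infinite_type K ->
  forall (L : Type) (lt : L -> L -> Prop), is_succ_cardinal_of K L lt ->
  exists (I : L -> Prop) (Lev : {a : L | I a} -> Type)
         (Rs : (node I Lev -> node I Lev -> Prop) -> Prop),
    is_lambda_system L lt I Lev Rs /\ width_is Lev Rs K /\
    ~ has_cofinal_branch lt Rs.
Proof.
  intros K Hinf L lt HS.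
  pose proof (no_max K L lt Hinf HS) as NM.
  destruct (dedekind K Hinf) as [s Hs].
  set (k0 := s 0). set (k1 := s 1).
  assert (Hk : k0 <> k1) by (intro E; apply Hs in E; discriminate).
  pose proof (hartogs K L lt k0 HS) as HKL.
  destruct HS as [[W [Tr Tri]] [Hseg HL]].
  pose proof (wf_irrefl L lt W) as Irr.
  set (e := fun b => proj1_sig (constructive_indefinite_description _ (Hseg b))).
  assert (He : forall b x y, e b x = e b y -> x = y).
  { intro b. unfold e. destruct (constructive_indefinite_description _ _). auto. }
  set (I := fun _ : L => True).
  set (Lev := fun _ : {a : L | I a} => K).
  set (rel := fun (i : K) (u v : node I Lev) =>
     projT2 u = k0 /\ projT2 v = k1 /\ exists H : lt (lvl u) (lvl v), e (lvl v) (exist _ (lvl u) H) = i).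
  set (Rs := fun R => exists i, R = rel i).
  assert (RsK : card_le {R | Rs R} K).
  { exists (fun r : {R | Rs R} => proj1_sig (constructive_indefinite_description (fun i => proj1_sig r = rel i) (proj2_sig r))).
    intros [R1 H1] [R2 H2]. simpl.
    destruct (constructive_indefinite_description _ H1) as [i1 E1].
    destruct (constructive_indefinite_description _ H2) as [i2 E2]. simpl. intro; subst.
    f_equal. apply proof_irrelevance. }
  assert (Hlev : forall i u v, rel i u v -> lt (lvl u) (lvl v)).
  { intros i u v [_ [_ [H _]]]. exact H. }
  exists I, Lev, Rs. split; [|split].
  - split; [|split; [|split; [|split; [|split; [|split]]]]].
    + intro x. exists x. split. exact Logic.I. apply Irr.
    + intro a. split. exact (inhabits k0). split. exact HKL. intro H. apply HL.
      exact H.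
    + intros R [i ->]. split.
      * intros a b c [_ [Hb _]] [Hb' _]. exfalso. apply Hk. congruence.
      * intros a b c [Ha [Hc [Hac Eac]]] [Hb [_ [Hbc Ebc]]].
        left. rewrite <- Ebc in Eac. apply He in Eac.
        apply (f_equal (@proj1_sig _ _)) in Eac. simpl in Eac.
        destruct a as [[xa pa] ka]. destruct b as [[xb pb] kb]. unfold lvl in Eac. simpl in *.
        subst. destruct pa, pb. reflexivity.
    + exists (rel k0). exists k0. reflexivity.
    + split. apply cle_trans with K; auto. intro H. apply HL. apply cle_trans with {R | Rs R}; auto.
    + intros R [i ->]. apply Hlev.
    + intros a0 a1 H. exists k0, k1, (rel (e (proj1_sig a1) (exist _ (proj1_sig a0) H))).
      split. eexists; reflexivity.
      split. reflexivity. split. reflexivity. exists H. reflexivity.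
  - split; [|split].
    + intro a. exists (fun x => x). auto.
    + exact RsK.
    + intros M HM _. destruct HKL as [g _]. exact (HM (exist _ (g k0) Logic.I)).
  - intros [R [[i ->] [B [HB HC]]]].
    destruct HKL as [g _].
    assert (Step : forall u, B u -> exists v, B v /\ rel i u v).
    { intros u Hu. destruct (NM (lvl u)) as [x Hx]. destruct (HC x) as [v [Hv Hvx]].
      assert (Luv : lt (lvl u) (lvl v)).
      { destruct (Tri (lvl v) x) as [h|[h|h]]. contradiction. subst; auto. eauto. }
      exists v. split; auto. destruct (HB u v Hu Hv) as [E|[E|E]].
      - subst. exfalso. eapply Irr; eauto.
      - auto.
      - exfalso. apply Hlev in E. eapply Irr. eauto. }
    destruct (HC (g k0)) as [u [Hu _]].
    destruct (Step u Hu) as [v [Hv R1]]. destruct (Step v Hv) as [w [Hw R2]].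
    destruct R1 as [_ [E1 _]]. destruct R2 as [E2 _]. apply Hk. congruence.
Qed.
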